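(* Let $A,B$ be partially ordered sets, let $G,G'$ be passable games over $A$, and let $H,H'$ be passable games over $B$. Then (a) $G\lhd G'$ and $H\le H'$ imply $G+H\lhd G'+H'$; (b) $G\le G'$ and $H\lhd H'$ imply $G+H\lhd G'+H'$; (c) $G\le G'$ and $H\le H'$ imply $G+H\le G'+H'$. In particular, if $G\equiv G'$ and $H\equiv H'$, then $G+H\equiv G'+H'$.
   Context: Games over a poset $A$ are defined inductively: for each $a\in A$ there is an atomic game $[a]$, which has no options; and if $L$ and $R$ are non-empty sets of games, then $\{L\mid R\}$ is a composite game with left options $L$ and right options $R$. The relations $\le$ and $\lhd$ are defined by simultaneous recursion: $G\le H$ iff (1) every left option $G^L$ of $G$ satisfies $G^L\lhd H$, (2) every right option $H^R$ of $H$ satisfies $G\lhd H^R$, and (3) if $G$ or $H$ is atomic then $G\lhd H$; and $G\lhd H$ iff (1) some right option $G^R$ of $G$ satisfies $G^R\le H$, or (2) some left option $H^L$ of $H$ satisfies $G\le H^L$, or (3) $G=[a]$, $H=[b]$ are atomic and $a\le b$. $G\equiv H$ means $G\le H$ and $H\le G$. A game $G$ is passable if $G\lhd G$ and recursively all its options are passable. For a game $G$ over $A$ and $H$ over $B$, the sum $G+H$ is the game over $A\times B$ (componentwise order) defined recursively by $[a]+[b]=[(a,b)]$ when both are atomic, and otherwise $G+H=\{G^L+H,\,G+H^L\mid G^R+H,\,G+H^R\}$, where $G^L,G^R,H^L,H^R$ range over the options of $G$ and $H$ (atomic games contributing no options). *)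

(* Defs.v *)
From mathcomp Require Import all_boot all_order.
Set Implicit Arguments. Unset Strict Implicit. Unset Printing Implicit Defensive.

Inductive game (A : Type) : Type :=
| Atom : A -> game A
| Comp : forall (IL IR : Type), inhabited IL -> inhabited IR ->
         (IL -> game A) -> (IR -> game A) -> game A.

Arguments Atom {A} _.
Arguments Comp {A IL IR} _ _ _ _.

Section Rel.
Variables (A : Type) (leA : A -> A -> bool).

(* Simultaneous recursion: game_rel G H = (G <= H, G <| H). *)
Fixpoint game_rel (G : game A) : game A -> Prop * Prop :=
  fix game_rel' (H : game A) : Prop * Prop :=
    let lhd :=
      (match G with
       | Comp _ _ _ _ _ GR => exists j, (game_rel (GR j) H).1
       | Atom _ => False end)
      \/ (match H with
          | Comp _ _ _ _ HL _ => exists i, (game_rel' (HL i)).1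
          | Atom _ => False end)
      \/ (match G, H with
          | Atom a, Atom b => leA a b
          | _, _ => False end) in
    let le :=
      (match G with
       | Comp _ _ _ _ GL _ => forall i, (game_rel (GL i) H).2
       | Atom _ => True end)
      /\ (match H with
          | Comp _ _ _ _ _ HR => forall j, (game_rel' (HR j)).2
          | Atom _ => True end)
      /\ ((match G with Atom _ => True | _ => False end
           \/ match H with Atom _ => True | _ => False end) -> lhd) in
    (le, lhd).

Definition gle (G H : game A) : Prop := (game_rel G H).1.
Definition glhd (G H : game A) : Prop := (game_rel G H).2.
Definition gequiv (G H : game A) : Prop := gle G H /\ gle H G.

Fixpoint passable (G : game A) : Prop :=
  glhd G G /\
  match G with
  | Atom _ => True
  | Comp _ _ _ _ GL GR => (forall i, passable (GL i)) /\ (forall j, passable (GR j))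
  end.
End Rel.

Definition inh_inl (X Y : Type) (h : inhabited X) : inhabited (X + Y) :=
  match h with inhabits x => inhabits (inl x) end.

Fixpoint gsum (A B : Type) (G : game A) : game B -> game (A * B) :=
  fix gsum' (H : game B) : game (A * B) :=
    match G, H with
    | Atom a, Atom b => Atom (a, b)
    | Atom _, Comp _ _ hL hR HL HR =>
        Comp hL hR (fun i => gsum' (HL i)) (fun j => gsum' (HR j))
    | Comp _ _ hL hR GL GR, Atom _ =>
        Comp hL hR (fun i => gsum (GL i) H) (fun j => gsum (GR j) H)
    | Comp ILG IRG hL hR GL GR, Comp ILH IRH _ _ HL HR =>
        Comp (inh_inl ILH hL) (inh_inl IRH hR)
          (fun i => match i with inl i => gsum (GL i) H | inr i => gsum' (HL i) end)
          (fun j => match j with inl j => gsum (GR j) H | inr j => gsum' (HR j) end)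
    end.

Definition prod_le (dA dB : Order.disp_t) (A : porderType dA) (B : porderType dB)
  (p q : A * B) : bool := ((p.1 <= q.1)%O && (p.2 <= q.2)%O).

(* Main.v *)
Require Import Defs.
From mathcomp Require Import all_boot all_order.
From Stdlib Require Import Setoid.
Set Implicit Arguments.
Definition isL {A} (X G : game A) : Prop := match G with Comp _ _ _ _ GL _ => exists i, X = GL i | Atom _ => False end.
Definition isR {A} (X G : game A) : Prop := match G with Comp _ _ _ _ _ GR => exists i, X = GR i | Atom _ => False end.
Definition isAtom {A} (G : game A) : Prop := match G with Atom _ => True | _ => False end.
Section S.
Variables (A : Type) (le : A -> A -> bool).
Lemma gle_unf (G H : game A) : gle le G H <->
  (match G with Comp _ _ _ _ GL _ => forall i, glhd le (GL i) H | Atom _ => True end) /\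
  (match H with Comp _ _ _ _ _ HR => forall j, glhd le G (HR j) | _ => True end) /\
  ((isAtom G \/ isAtom H) -> glhd le G H).
Proof. destruct G, H; exact (iff_refl _). Qed.
Lemma glhd_unf (G H : game A) : glhd le G H <->
  (match G with Comp _ _ _ _ _ GR => exists j, gle le (GR j) H | Atom _ => False end) \/
  (match H with Comp _ _ _ _ HL _ => exists i, gle le G (HL i) | _ => False end) \/
  (match G, H with Atom a, Atom b => le a b | _, _ => False end).
Proof. destruct G, H; exact (iff_refl _). Qed.
Lemma gle_eq (G H : game A) : gle le G H <-> (forall X, isL X G -> glhd le X H) /\ (forall Y, isR Y H -> glhd le G Y) /\ (isAtom G \/ isAtom H -> glhd le G H).
Proof.
rewrite gle_unf.
destruct G as [a|IL IR hL hR GL GR], H as [b|JL JR kL kR HL HR]; simpl.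
all: split; intros [h1 [h2 h3]]; (split; [|split]); auto; intros; try contradiction.
all: repeat match goal with h : exists _, _ |- _ => destruct h as [? ->] end; auto.
all: first [apply h1 | apply h2]; eexists; reflexivity.
Qed.
Lemma glhd_eq (G H : game A) : glhd le G H <-> (exists X, isR X G /\ gle le X H) \/ (exists Y, isL Y H /\ gle le G Y) \/ (exists a b, G = Atom a /\ H = Atom b /\ le a b).
Proof.
rewrite glhd_unf.
destruct G as [a|IL IR hL hR GL GR], H as [b|JL JR kL kR HL HR]; simpl.
all: split.
all: intro h; repeat match goal with h : _ \/ _ |- _ => destruct h as [h|h] end; try contradiction.
all: repeat match goal with h : exists _, _ |- _ => destruct h as [? h] end.
all: repeat match goal with h : _ /\ _ |- _ => destruct h as [? h] end.
all: repeat match goal with h : isL _ _ |- _ => simpl in h | h : isR _ _ |- _ => simpl in h end; try contradiction.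
all: repeat match goal with h : exists _, _ = _ |- _ => destruct h as [? ->] end.
all: try discriminate.
all: repeat match goal with h : Atom _ = Atom _ |- _ => injection h as h; subst end.
all: eauto 10.
all: try (left; eexists; split; [eexists; reflexivity|eauto]).
all: try (right; left; eexists; split; [eexists; reflexivity|eauto]).
Qed.
Lemma gle_atoms a b : le a b -> gle le (Atom a) (Atom b).
Proof. intro h. apply gle_eq. split; [|split]; simpl; try contradiction. intros _; apply glhd_eq; right; right; eauto. Qed.
End S.

Definition opt {A} (X G : game A) := isL X G \/ isR X G.
Lemma opt_wf A : well_founded (@opt A).
Proof.
intro G; induction G as [a | IL IR hL hR GL IHL GR IHR]; constructor; intros X [HX|HX]; simpl in HX; try contradiction; destruct HX as [i ->]; auto.
Qed.

Section Trans.
Variables (A : Type) (le : A -> A -> bool) (le_tr : forall a b c, le a b -> le b c -> le a c).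

Lemma trans_all (G H K : game A) :
  (gle le G H -> gle le H K -> gle le G K) /\
  (glhd le G H -> gle le H K -> glhd le G K) /\
  (gle le G H -> glhd le H K -> glhd le G K).
Proof.
revert H K.
induction G as [G IHG] using (well_founded_induction (@opt_wf A)).
intros H; induction H as [H IHH] using (well_founded_induction (@opt_wf A)).
intros K; induction K as [K IHK] using (well_founded_induction (@opt_wf A)).
assert (T2 : glhd le G H -> gle le H K -> glhd le G K).
{ intros h1 h2. apply glhd_eq in h1.
  destruct h1 as [[X [hX hXH]]|[[Y [hY hGY]]|[a [b [-> [-> hab]]]]]].
  - apply glhd_eq; left; exists X; split; auto.
    apply (proj1 (IHG X (or_intror hX) H K)); auto.
  - apply gle_eq in h2; destruct h2 as [h2 _].
    apply (proj2 (proj2 (IHH Y (or_introl hY) K))); auto.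
  - pose proof h2 as h2'. apply gle_eq in h2; destruct h2 as [_ [_ h3]].
    specialize (h3 (or_introl I)). apply glhd_eq in h3.
    destruct h3 as [[X [hX _]]|[[Y [hY hbY]]|[b' [c [e1 [-> hbc]]]]]].
    + simpl in hX; contradiction.
    + apply glhd_eq; right; left; exists Y; split; auto.
      apply (proj1 (IHK Y (or_introl hY))); auto. apply gle_atoms; auto.
    + injection e1 as <-. apply glhd_eq; right; right; exists a, c; eauto. }
assert (T3 : gle le G H -> glhd le H K -> glhd le G K).
{ intros h1 h2. apply glhd_eq in h2.
  destruct h2 as [[X [hX hXK]]|[[Y [hY hHY]]|[b [c [-> [-> hbc]]]]]].
  - apply gle_eq in h1; destruct h1 as [_ [h1 _]].
    apply (proj1 (proj2 (IHH X (or_intror hX) K))); auto.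
  - apply glhd_eq; right; left; exists Y; split; auto.
    apply (proj1 (IHK Y (or_introl hY))); auto.
  - apply gle_eq in h1; destruct h1 as [_ [_ h3]].
    specialize (h3 (or_intror I)). apply glhd_eq in h3.
    destruct h3 as [[X [hX hXb]]|[[Y [hY _]]|[a [b' [-> [e1 hab]]]]]].
    + apply glhd_eq; left; exists X; split; auto.
      apply (proj1 (IHG X (or_intror hX) (Atom b) (Atom c))); auto. apply gle_atoms; auto.
    + simpl in hY; contradiction.
    + injection e1 as <-. apply glhd_eq; right; right; exists a, c; eauto. }
split; [|split]; auto.
intros h1 h2. apply gle_eq; split; [|split].
- intros X hX. apply gle_eq in h1; destruct h1 as [h1 _].
  apply (proj1 (proj2 (IHG X (or_introl hX) H K))); auto.
- intros Y hY. apply gle_eq in h2; destruct h2 as [_ [h2 _]].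
  apply (proj2 (proj2 (IHK Y (or_intror hY)))); auto.
- intros [hG|hK].
  + apply T2; auto. apply gle_eq in h1; apply h1; auto.
  + apply T3; auto. apply gle_eq in h2; apply h2; auto.
Qed.
End Trans.

Lemma passable_eq A (le : A -> A -> bool) G : passable le G <-> glhd le G G /\ (forall X, opt X G -> passable le X).
Proof.
destruct G as [a|IL IR hL hR GL GR]; simpl; split.
- intros [h _]; split; auto. intros X [hX|hX]; contradiction.
- intros [h _]; split; auto.
- intros [h [h1 h2]]; split; auto. intros X [[i ->]|[i ->]]; auto.
- intros [h h']; split; auto. split; intros i; apply h'; [left|right]; exists i; reflexivity.
Qed.

Lemma isL_sum A B (G : game A) (H : game B) X :
  isL X (gsum G H) <-> (exists G0, isL G0 G /\ X = gsum G0 H) \/ (exists H0, isL H0 H /\ X = gsum G H0).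
Proof.
destruct G as [a|IL IR hL hR GL GR], H as [b|JL JR kL kR HL HR]; simpl; split.
all: intro h; repeat match goal with h : _ \/ _ |- _ => destruct h as [h|h] end; try contradiction.
all: repeat match goal with h : exists _, _ |- _ => destruct h as [? h] end.
all: repeat match goal with h : _ /\ _ |- _ => destruct h as [? h] end.
all: try contradiction.
all: repeat match goal with h : exists _, _ |- _ => destruct h as [? h] end.
all: subst.
all: try (right; eexists; split; [eexists; reflexivity|reflexivity]).
all: try (left; eexists; split; [eexists; reflexivity|reflexivity]).
all: try (eexists; reflexivity).
all: try match goal with x : ?T |- exists _ : (?T + _)%type, _ => exists (inl x); reflexivity end.
all: try match goal with x : ?T |- exists _ : (_ + ?T)%type, _ => exists (inr x); reflexivity end.
all: try match goal with x : (_ + _)%type |- _ => destruct x as [x|x] end.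
all: try (left; eexists; split; [eexists; reflexivity|reflexivity]).
all: try (right; eexists; split; [eexists; reflexivity|reflexivity]).
Qed.

Lemma isR_sum A B (G : game A) (H : game B) X :
  isR X (gsum G H) <-> (exists G0, isR G0 G /\ X = gsum G0 H) \/ (exists H0, isR H0 H /\ X = gsum G H0).
Proof.
destruct G as [a|IL IR hL hR GL GR], H as [b|JL JR kL kR HL HR]; simpl; split.
all: intro h; repeat match goal with h : _ \/ _ |- _ => destruct h as [h|h] end; try contradiction.
all: repeat match goal with h : exists _, _ |- _ => destruct h as [? h] end.
all: repeat match goal with h : _ /\ _ |- _ => destruct h as [? h] end.
all: try contradiction.
all: repeat match goal with h : exists _, _ |- _ => destruct h as [? h] end.
all: subst.
all: try (right; eexists; split; [eexists; reflexivity|reflexivity]).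
all: try (left; eexists; split; [eexists; reflexivity|reflexivity]).
all: try (eexists; reflexivity).
all: try match goal with x : ?T |- exists _ : (?T + _)%type, _ => exists (inl x); reflexivity end.
all: try match goal with x : ?T |- exists _ : (_ + ?T)%type, _ => exists (inr x); reflexivity end.
all: try match goal with x : (_ + _)%type |- _ => destruct x as [x|x] end.
all: try (left; eexists; split; [eexists; reflexivity|reflexivity]).
all: try (right; eexists; split; [eexists; reflexivity|reflexivity]).
Qed.

Lemma isAtom_sum A B (G : game A) (H : game B) : isAtom (gsum G H) -> isAtom G /\ isAtom H.
Proof. destruct G, H; simpl; tauto. Qed.

Ltac pas := solve [assumption | match goal with h : forall X, opt X _ -> _ |- _ => apply h; solve [left; auto | right; auto] end].
Section Sum.
Variables (A B : Type) (leA : A -> A -> bool) (leB : B -> B -> bool)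
  (leAB : A * B -> A * B -> bool)
  (trA : forall a b c, leA a b -> leA b c -> leA a c)
  (trB : forall a b c, leB a b -> leB b c -> leB a c)
  (mono : forall a a' b b', leA a a' -> leB b b' -> leAB (a, b) (a', b')).

Definition PS (G G' : game A) (H H' : game B) : Prop :=
  passable leA G -> passable leA G' -> passable leB H -> passable leB H' ->
  (glhd leA G G' -> gle leB H H' -> glhd leAB (gsum G H) (gsum G' H')) /\
  (gle leA G G' -> glhd leB H H' -> glhd leAB (gsum G H) (gsum G' H')) /\
  (gle leA G G' -> gle leB H H' -> gle leAB (gsum G H) (gsum G' H')).

Lemma sum_all G G' H H' : PS G G' H H'.
Proof.
revert G' H H'.
induction G as [G IH1] using (well_founded_induction (@opt_wf A)).
intros G'; induction G' as [G' IH2] using (well_founded_induction (@opt_wf A)).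
intros H; induction H as [H IH3] using (well_founded_induction (@opt_wf B)).
intros H'; induction H' as [H' IH4] using (well_founded_induction (@opt_wf B)).
intros pG pG' pH pH'.
pose proof pG as qG; pose proof pG' as qG'; pose proof pH as qH; pose proof pH' as qH'.
apply passable_eq in qG, qG', qH, qH'.
destruct qG as [sG oG], qG' as [sG' oG'], qH as [sH oH], qH' as [sH' oH'].
assert (Ha : glhd leA G G' -> gle leB H H' -> glhd leAB (gsum G H) (gsum G' H')).
{ intros h1 h2. apply glhd_eq in h1.
  destruct h1 as [[X [hX hXG]]|[[Y [hY hGY]]|[a [a' [-> [-> haa]]]]]].
  - apply glhd_eq; left; exists (gsum X H); split.
    + apply isR_sum; left; eauto.
    + edestruct (IH1 X (or_intror hX) G' H H') as [c1 [c2 c3]]; try pas; eauto.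
  - apply glhd_eq; right; left; exists (gsum Y H'); split.
    + apply isL_sum; left; eauto.
    + edestruct (IH2 Y (or_introl hY) H H') as [c1 [c2 c3]]; try pas; eauto.
  - assert (hHH : glhd leB H H') by (apply (proj1 (proj2 (@trans_all _ leB trB H H H'))); auto).
    assert (gaa : gle leA (Atom a) (Atom a')) by (apply gle_atoms; auto).
    apply glhd_eq in hHH.
    destruct hHH as [[X [hX hXH]]|[[Y [hY hHY]]|[b [b' [-> [-> hbb]]]]]].
    + apply glhd_eq; left; exists (gsum (Atom a) X); split.
      * apply isR_sum; right; eauto.
      * edestruct (IH3 X (or_intror hX) H') as [c1 [c2 c3]]; try pas; eauto.
    + apply glhd_eq; right; left; exists (gsum (Atom a') Y); split.
      * apply isL_sum; right; eauto.
      * edestruct (IH4 Y (or_introl hY)) as [c1 [c2 c3]]; try pas; eauto.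
    + apply glhd_eq; right; right; exists (a, b), (a', b'); simpl; auto. }
assert (Hb : gle leA G G' -> glhd leB H H' -> glhd leAB (gsum G H) (gsum G' H')).
{ intros h1 h2. apply glhd_eq in h2.
  destruct h2 as [[X [hX hXH]]|[[Y [hY hHY]]|[b [b' [-> [-> hbb]]]]]].
  - apply glhd_eq; left; exists (gsum G X); split.
    + apply isR_sum; right; eauto.
    + edestruct (IH3 X (or_intror hX) H') as [c1 [c2 c3]]; try pas; eauto.
  - apply glhd_eq; right; left; exists (gsum G' Y); split.
    + apply isL_sum; right; eauto.
    + edestruct (IH4 Y (or_introl hY)) as [c1 [c2 c3]]; try pas; eauto.
  - assert (hGG : glhd leA G G') by (apply (proj2 (proj2 (@trans_all _ leA trA G G' G'))); auto).
    assert (gbb : gle leB (Atom b) (Atom b')) by (apply gle_atoms; auto).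
    apply glhd_eq in hGG.
    destruct hGG as [[X [hX hXG]]|[[Y [hY hGY]]|[a [a' [-> [-> haa]]]]]].
    + apply glhd_eq; left; exists (gsum X (Atom b)); split.
      * apply isR_sum; left; eauto.
      * edestruct (IH1 X (or_intror hX) G' (Atom b) (Atom b')) as [c1 [c2 c3]]; try pas; eauto.
    + apply glhd_eq; right; left; exists (gsum Y (Atom b')); split.
      * apply isL_sum; left; eauto.
      * edestruct (IH2 Y (or_introl hY) (Atom b) (Atom b')) as [c1 [c2 c3]]; try pas; eauto.
    + apply glhd_eq; right; right; exists (a, b), (a', b'); simpl; auto. }
split; [exact Ha|split; [exact Hb|]].
intros h1 h2. pose proof h1 as e1; pose proof h2 as e2.
apply gle_eq in e1, e2.
destruct e1 as [l1 [r1 t1]], e2 as [l2 [r2 t2]].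
apply gle_eq; split; [|split].
- intros X hX. apply isL_sum in hX.
  destruct hX as [[G0 [hG0 ->]]|[H0 [hH0 ->]]].
  + edestruct (IH1 G0 (or_introl hG0) G' H H') as [c1 [c2 c3]]; try pas; eauto.
  + edestruct (IH3 H0 (or_introl hH0) H') as [c1 [c2 c3]]; try pas; eauto.
- intros Y hY. apply isR_sum in hY.
  destruct hY as [[G0 [hG0 ->]]|[H0 [hH0 ->]]].
  + edestruct (IH2 G0 (or_intror hG0) H H') as [c1 [c2 c3]]; try pas; eauto.
  + edestruct (IH4 H0 (or_intror hH0)) as [c1 [c2 c3]]; try pas; eauto.
- intros [hA|hA]; apply isAtom_sum in hA; destruct hA as [hA _]; apply Ha; auto; apply t1; auto.
Qed.
End Sum.

Theorem corollary8p5 (dA dB : Order.disp_t) (A : porderType dA) (B : porderType dB)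
  (G G' : game A) (H H' : game B) :
  passable (<=%O) G -> passable (<=%O) G' ->
  passable (<=%O) H -> passable (<=%O) H' ->
  (glhd (<=%O) G G' -> gle (<=%O) H H' ->
     glhd (@prod_le dA dB A B) (gsum G H) (gsum G' H')) /\
  (gle (<=%O) G G' -> glhd (<=%O) H H' ->
     glhd (@prod_le dA dB A B) (gsum G H) (gsum G' H')) /\
  (gle (<=%O) G G' -> gle (<=%O) H H' ->
     gle (@prod_le dA dB A B) (gsum G H) (gsum G' H')) /\
  (gequiv (<=%O) G G' -> gequiv (<=%O) H H' ->
     gequiv (@prod_le dA dB A B) (gsum G H) (gsum G' H')).
Proof.
intros pG pG' pH pH'.
have trA : forall a b c : A, (a <= b)%O -> (b <= c)%O -> (a <= c)%O.
  by move=> a b c h1 h2; exact: (Order.POrderTheory.le_trans h1 h2).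
have trB : forall a b c : B, (a <= b)%O -> (b <= c)%O -> (a <= c)%O.
  by move=> a b c h1 h2; exact: (Order.POrderTheory.le_trans h1 h2).
have mono : forall (a a' : A) (b b' : B), (a <= a')%O -> (b <= b')%O ->
    @prod_le dA dB A B (a, b) (a', b').
  by move=> a a' b b' h1 h2; rewrite /prod_le /= h1 h2.
have S1 := @sum_all A B _ _ _ trA trB mono G G' H H' pG pG' pH pH'.
have S2 := @sum_all A B _ _ _ trA trB mono G' G H' H pG' pG pH' pH.
destruct S1 as [c1 [c2 c3]], S2 as [d1 [d2 d3]].
split; [exact c1|split; [exact c2|split; [exact c3|]]].
intros [e1 e2] [f1 f2]; split; auto.
Qed.
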